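(* Let $d$ be such that $3d/4$ and $12d\mathcal{D}$ are integers, where $\mathcal{D}=\frac{\ln n}{\sqrt d}$. Let $a$ be a uniformly random regular point and $b$ a special point in $\{-\frac1{\sqrt d},\frac1{\sqrt d}\}^d$. For $d\ge8\ln^2n$, $\Pr[a^\top b>\frac14-6\mathcal{D}]\le\frac1{n^3}$ and $\Pr[a^\top b<\frac14-18\mathcal{D}]\le\frac1{n^3}$.
   Context: A point of $\{-\frac1{\sqrt d},\frac1{\sqrt d}\}^d$ is regular if it has exactly $\frac{3d}4$ coordinates equal to $\frac1{\sqrt d}$ and $\frac d4$ equal to $-\frac1{\sqrt d}$; it is special if it has exactly $\frac{3d}4-12d\mathcal{D}$ coordinates equal to $\frac1{\sqrt d}$ and $\frac d4+12d\mathcal{D}$ equal to $-\frac1{\sqrt d}$. *)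

(* Defs.v *)
From HB Require Import structures.
From mathcomp Require Import all_boot all_order all_algebra.
From mathcomp Require Import reals exp.
Set Implicit Arguments. Unset Strict Implicit. Unset Printing Implicit Defensive.
Import Order.TTheory GRing.Theory Num.Theory.
Local Open Scope ring_scope.

(* A point of {-1/sqrt d, 1/sqrt d}^d is encoded by its sign pattern
   s : {ffun 'I_d -> bool}; coordinate i is 1/sqrt d if s i, else -1/sqrt d. *)
Definition coord {R : realType} (d : nat) (s : {ffun 'I_d -> bool}) (i : 'I_d) : R :=
  if s i then 1 / Num.sqrt (d%:R) else - (1 / Num.sqrt (d%:R)).

Definition npos (d : nat) (s : {ffun 'I_d -> bool}) : nat := #|[set i | s i]|.
Definition nneg (d : nat) (s : {ffun 'I_d -> bool}) : nat := #|[set i | ~~ s i]|.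

Definition calD {R : realType} (n d : nat) : R := ln (n%:R) / Num.sqrt (d%:R).

Definition regular {R : realType} (d : nat) (s : {ffun 'I_d -> bool}) : bool :=
  ((npos s)%:R == 3 * d%:R / 4 :> R) && ((nneg s)%:R == d%:R / 4 :> R).

Definition special {R : realType} (n d : nat) (s : {ffun 'I_d -> bool}) : bool :=
  ((npos s)%:R == 3 * d%:R / 4 - 12 * d%:R * calD n d :> R) &&
  ((nneg s)%:R == d%:R / 4 + 12 * d%:R * calD n d :> R).

Definition dotp {R : realType} (d : nat) (a b : {ffun 'I_d -> bool}) : R :=
  \sum_(i < d) coord a i * coord b i.

Definition prob_regular {R : realType} (d : nat) (P : {ffun 'I_d -> bool} -> bool) : R :=
  #|[set a | @regular R d a && P a]|%:R / #|[set a | @regular R d a]|%:R.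

(* Main.v *)
Require Import Defs.
From HB Require Import structures.
From mathcomp Require Import all_boot all_order all_algebra.
From mathcomp Require Import reals exp.
From mathcomp Require Import sequences.
From mathcomp Require Import zify ring lra.
Import Order.TTheory GRing.Theory Num.Theory.
Set Implicit Arguments. Unset Strict Implicit. Unset Printing Implicit Defensive.

Lemma binM_le (M d j : nat) : M <= d -> 'C(M,j) * d^j <= 'C(d,j) * M^j.
Proof.
move=> hMd; elim: j => [|j IH]; first by rewrite !bin0.
rewrite -(@leq_pmul2l j.+1) // !mulnA !mul_bin_left !expnS.
have h1 : (M - j) * d <= (d - j) * M by nia.
have := leq_mul h1 IH.
by rewrite -!mulnA (mulnCA d) (mulnCA M) !mulnA.
Qed.

Section Sets.
Variable T : finType.

Lemma N_count (J : {set T}) k : #|J| <= k ->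
  #|[set S : {set T} | (#|S| == k) && (J \subset S)]| = 'C(#|T| - #|J|, k - #|J|).
Proof.
move=> hJ.
have hC : #|~: J| = #|T| - #|J| by rewrite -(cardsC J) addKn.
rewrite -hC -cards_draws.
have -> : [set S : {set T} | (#|S| == k) && (J \subset S)] =
   (fun A => A :|: J) @: [set A : {set T} | A \subset ~: J & #|A| == k - #|J|].
  apply/setP => S; rewrite inE; apply/idP/imsetP.
  - case/andP => /eqP hS hJS; exists (S :\: J).
      rewrite inE subsetDr /= cardsD hS.
      by move/setIidPr: hJS => ->.
    by rewrite setUC -{1}(setID S J) (setIidPr hJS).
  - case=> A; rewrite inE => /andP [hA /eqP hAc] ->.
    rewrite subsetUr andbT cardsU hAc.
    have -> : A :&: J = set0.
      apply/setP => x; rewrite !inE; apply/negP => /andP [xA xJ].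
      by move: (subsetP hA x xA); rewrite inE xJ.
    by rewrite cards0 subn0 subnK.
rewrite card_in_imset // => A1 A2; rewrite !inE => /andP [h1 _] /andP [h2 _] e.
apply/setP => x; have := congr1 (fun X : {set T} => x \in X) e; rewrite /= !inE.
case xJ: (x \in J); last by rewrite !orbF.
have n1 : x \notin A1 by apply/negP => /(subsetP h1); rewrite inE xJ.
have n2 : x \notin A2 by apply/negP => /(subsetP h2); rewrite inE xJ.
by rewrite (negbTE n1) (negbTE n2).
Qed.
End Sets.

Section Sets.
Variable T : finType.
Lemma fact_moment (B : {set T}) k j : j <= k ->
  \sum_(S : {set T} | #|S| == k) 'C(#|S :&: B|, j) = 'C(#|B|, j) * 'C(#|T| - j, k - j).
Proof.
move=> hjk.
rewrite (eq_bigr (fun S => \sum_(J : {set T} | (J \subset S :&: B) && (#|J| == j)) 1));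
  last by move=> S _; rewrite sum1dep_card cards_draws.
rewrite (exchange_big_dep (fun J : {set T} => (J \subset B) && (#|J| == j))) /=; last first.
  by move=> S J _; rewrite subsetI => /andP [/andP [_ ->] ->].
rewrite (eq_bigr (fun _ => 'C(#|T| - j, k - j))).
  by rewrite sum_nat_cond_const cards_draws.
move=> J /andP [hJB /eqP hJ].
rewrite (eq_bigl (fun S : {set T} => (#|S| == k) && (J \subset S))).
  by rewrite sum1dep_card N_count hJ.
by move=> S; rewrite subsetI hJB hJ eqxx !andbT.
Qed.
End Sets.

Local Open Scope ring_scope.

Lemma binom_widen (R : comNzRingType) (y : R) z k : (z <= k)%N ->
  (y + 1) ^+ z = \sum_(i < k.+1) y ^+ i *+ 'C(z, i).
Proof.
move=> hz; rewrite exprD1n (big_ord_widen k.+1 (fun i => y ^+ i *+ 'C(z, i))) //.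
rewrite big_mkcond /=; apply: eq_bigr => i _.
by case: ifP => // /negbT; rewrite -leqNgt => h; rewrite bin_small.
Qed.

Lemma binom_id (T : finType) k j : (j <= k)%N ->
  ('C(#|T|, k) * 'C(k, j) = 'C(#|T|, j) * 'C(#|T| - j, k - j))%N.
Proof.
move=> hjk; have := fact_moment [set: T] hjk; rewrite cardsT => <-.
rewrite (eq_bigr (fun _ => 'C(k, j))).
  by rewrite sum_nat_cond_const card_draws.
by move=> S /eqP hS; rewrite setIT hS.
Qed.

Lemma mgf_bound (R : realFieldType) (T : finType) (B : {set T}) k (y : R) :
  0 <= y -> (0 < #|T|)%N ->
  \sum_(S : {set T} | #|S| == k) (y + 1) ^+ #|S :&: B| <=
  'C(#|T|, k)%:R * (y * #|B|%:R / #|T|%:R + 1) ^+ k.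
Proof.
move=> hy hT.
rewrite (eq_bigr (fun S => \sum_(i < k.+1) y ^+ i *+ 'C(#|S :&: B|, i))); last first.
  move=> S /eqP hS; apply: binom_widen; rewrite -hS; apply: subset_leq_card; exact: subsetIl.
rewrite exchange_big /=.
rewrite exprD1n big_distrr /=; apply: ler_sum => i _.
rewrite sumrMnr fact_moment; last by rewrite -ltnS.
have hik : (i <= k)%N by rewrite -ltnS.
set N := 'C(#|T| - i, k - i).
have hM : (#|B| <= #|T|)%N by apply: max_card.
have key := binM_le i hM.
have key2 : ('C(#|B|, i) * N * #|T| ^ i <= 'C(#|T|, k) * 'C(k, i) * #|B| ^ i)%N.
  rewrite binom_id // -mulnA (mulnC N) mulnA -[X in (_ <= X)%N]mulnA (mulnC N) mulnA.
  by rewrite leq_mul2r key orbT.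
have hd : 0 < #|T|%:R ^+ i :> R by rewrite exprn_gt0 // ltr0n.
have hd0 : #|T|%:R ^+ i != 0 :> R by rewrite gt_eqF.
have eR : 'C(#|T|, k)%:R * ((y * #|B|%:R / #|T|%:R) ^+ i *+ 'C(k, i)) =
   y ^+ i * (('C(#|T|, k) * 'C(k, i) * #|B| ^ i)%N%:R / #|T|%:R ^+ i) :> R.
  rewrite -mulr_natr !natrM natrX !exprMn exprVn; field; exact: hd0.
rewrite eR -[X in X <= _]mulr_natr; apply: ler_wpM2l; first by rewrite exprn_ge0.
by rewrite ler_pdivlMr // -natrX -natrM ler_nat.

Qed.

Local Open Scope ring_scope.

Lemma poly_aux (R : realType) (p l : R) : 0 <= p <= 1 -> 0 <= l <= 3/8 ->
  (1 - p) * (1 - (1 - p) * l) <= (1 + p * l) * ((1 + 43/100 * l^+2) * (1 - (1 - p) * l) - p).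
Proof.
move=> /andP [hp0 hp1] /andP [hl0 hl1].
have hpq : p * (1 - p) <= 1/4 by have := sqr_ge0 (p - 1/2); nra.
have h1 : 43/100 * ((1 + p * l) * (1 - (1 - p) * l)) - p * (1 - p) >= 0.
  have : (1 + p * l) * (1 - (1 - p) * l) >= 1 - l - l^+2/4 by nra.
  nra.
nra.
Qed.

Lemma hoef (R : realType) (p l : R) : 0 <= p <= 1 -> 0 <= l <= 3/8 ->
  (expR l - 1) * p + 1 <= expR (p * l + 43/100 * l^+2).
Proof.
move=> hp hl; have /andP [hp0 hp1] := hp; have /andP [hl0 hl1] := hl.
set q := 1 - p.
have eL : expR l = expR (p * l) * expR (q * l) by rewrite -expRD /q; congr expR; ring.
set E := expR (p * l); set V := expR (q * l).
have hE : 1 + p * l <= E by exact: expR_ge1Dx.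
have hV : V * (1 - q * l) <= 1.
  have h := expR_ge1Dx (- (q * l)).
  have hV0 : 0 <= V by exact: expR_ge0.
  have := ler_wpM2l hV0 h; rewrite /V -expRD subrr expR0; lra.
have hV0 : 0 <= V by exact: expR_ge0.
have hql : 0 < 1 - q * l by rewrite /q; nra.
have hc := expR_ge1Dx (43/100 * l^+2).
rewrite expRD eL.
have hE0 : 0 <= E by exact: expR_ge0.
have hp' := poly_aux hp hl.
have hmain : (E * V - 1) * p + 1 <= E * (1 + 43/100 * l^+2).
  rewrite -(@ler_pM2r _ (1 - q * l)) //.
  have : p * E * (V * (1 - q * l)) <= p * E * 1 by apply: ler_wpM2l => //; exact: mulr_ge0.
  have hbr : 0 <= (1 + 43/100 * l^+2) * (1 - q * l) - p.
    have h1 : 0 <= (1 - p) * (1 - l) by apply: mulr_ge0; lra.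
    have h2 : 0 <= l^+2 * (1 - q * l) by apply: mulr_ge0; [exact: sqr_ge0 | lra].
    have -> : (1 + 43/100 * l^+2) * (1 - q * l) - p = (1 - p) * (1 - l) + 43/100 * (l^+2 * (1 - q * l)) by rewrite /q; ring.
    lra.
  have : (1 + p * l) * ((1 + 43/100 * l^+2) * (1 - q * l) - p) <= E * ((1 + 43/100 * l^+2) * (1 - q * l) - p) by apply: ler_wpM2r.
  rewrite /q in hp' *; nra.
apply: (le_trans hmain); apply: ler_wpM2l => //.
Qed.

Local Open Scope ring_scope.

Lemma tail_bound (R : realType) (T : finType) (B : {set T}) k (l z1 : R)
   (P : {set T} -> bool) :
  0 <= l <= 3/8 -> (0 < #|T|)%N ->
  (forall S : {set T}, #|S| == k -> P S -> z1 <= #|S :&: B|%:R) ->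
  #|[set S : {set T} | (#|S| == k) && P S]|%:R <=
  'C(#|T|, k)%:R * expR (k%:R * ((#|B|%:R / #|T|%:R) * l + 43/100 * l^+2) - l * z1) :> R.
Proof.
move=> hl hT hP; have /andP [hl0 hl1] := hl.
set p := #|B|%:R / #|T|%:R.
have hp : 0 <= p <= 1.
  apply/andP; split; first by rewrite /p divr_ge0.
  rewrite /p ler_pdivrMr ?ltr0n // mul1r ler_nat; exact: max_card.
have hcnt : #|[set S : {set T} | (#|S| == k) && P S]|%:R * expR (l * z1) <=
    \sum_(S : {set T} | #|S| == k) expR (l * #|S :&: B|%:R) :> R.
  rewrite -sum1dep_card natr_sum big_distrl /=.
  rewrite (bigID P (fun S : {set T} => #|S| == k)) /=.
  apply: ler_wpDr; first by apply: sumr_ge0 => S _; exact: expR_ge0.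
  apply: ler_sum => S /andP [hS hPS]; rewrite mul1r ler_expR.
  by apply: ler_wpM2l => //; apply: hP.
have hsum : \sum_(S : {set T} | #|S| == k) expR (l * #|S :&: B|%:R) =
    \sum_(S : {set T} | #|S| == k) ((expR l - 1) + 1) ^+ #|S :&: B| :> R.
  by apply: eq_bigr => S _; rewrite subrK mulrC expRM_natl.
have hy : 0 <= expR l - 1 by rewrite subr_ge0 -expR0 ler_expR.
have hm := mgf_bound B k hy hT.
have hh := hoef hp hl.
have hpow : ((expR l - 1) * #|B|%:R / #|T|%:R + 1) ^+ k <= expR (k%:R * (p * l + 43/100 * l^+2)).
  rewrite expRM_natl; apply: lerXn2r.
  - by rewrite nnegrE addr_ge0 // divr_ge0 // mulr_ge0.
  - by rewrite nnegrE expR_ge0.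
  by rewrite -mulrA.
have hC : 0 <= 'C(#|T|, k)%:R :> R by [].
rewrite hsum in hcnt; have h1 := le_trans hcnt (le_trans hm (ler_wpM2l hC hpow)).
by rewrite expRB mulrA ler_pdivlMr ?expR_gt0.
Qed.

Local Open Scope ring_scope.

Definition phi (d : nat) (S : {set 'I_d}) : {ffun 'I_d -> bool} := [ffun i => i \notin S].
Arguments phi {d} S.

Lemma nneg_phi d (S : {set 'I_d}) : nneg (phi S) = #|S|.
Proof. by rewrite /nneg; apply: eq_card => i; rewrite !inE ffunE negbK. Qed.

Lemma npos_phi d (S : {set 'I_d}) : npos (phi S) = (d - #|S|)%N.
Proof.
have h := cardsC S; rewrite card_ord in h.
rewrite /npos -[X in _ = (X - _)%N]h addKn.
by apply: eq_card => i; rewrite !inE ffunE.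
Qed.

Lemma card_regular (R : realType) d k3 (P : {ffun 'I_d -> bool} -> bool) :
  k3%:R = 3 * d%:R / 4 :> R ->
  #|[set a | @regular R d a && P a]| =
  #|[set S : {set 'I_d} | (#|S| == (d - k3)%N) && P (phi S)]|.
Proof.
move=> hk3.
have hk3d : (k3 <= d)%N by rewrite -(ler_nat R) hk3; have := ler0n R d; lra.
have hk : (d - k3)%:R = d%:R / 4 :> R by rewrite natrB // hk3; field.
have hreg : forall S : {set 'I_d}, @regular R d (phi S) = (#|S| == (d - k3)%N).
  move=> S; rewrite /regular nneg_phi npos_phi -hk -hk3 !eqr_nat.
  apply/andP/idP => [[_ ->] // | /eqP hS]; split; first by rewrite hS subKn.
  by rewrite hS.
have phi_inj : injective (@phi d).
  move=> S1 S2 e; apply/setP => i.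
  by have := congr1 (fun f : {ffun 'I_d -> bool} => f i) e; rewrite /phi !ffunE => /negb_inj.
rewrite -(card_imset [set S : {set 'I_d} | (#|S| == (d - k3)%N) && P (phi S)] phi_inj).
apply: eq_card => a; rewrite inE; apply/idP/imsetP.
- move=> /andP [ha hPa].
  have ea : phi [set i | ~~ a i] = a by apply/ffunP => i; rewrite ffunE inE negbK.
  exists [set i | ~~ a i]; last by rewrite ea.
  by rewrite inE -hreg ea ha hPa.
- by move=> [S]; rewrite inE => /andP [hS hP] ->; rewrite hreg hS.
Qed.

Lemma sum_ind d (A : {set 'I_d}) (R : realType) :
  \sum_(i < d) (i \in A)%:R = #|A|%:R :> R.
Proof.
rewrite -sum1_card natr_sum [RHS]big_mkcond /=; apply: eq_bigr => i _.
by case: (i \in A).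
Qed.

Lemma dot_phi (R : realType) d (S : {set 'I_d}) (b : {ffun 'I_d -> bool}) : (0 < d)%N ->
  @dotp R d (phi S) b = (d%:R - 2 * #|S|%:R - 2 * #|[set i | ~~ b i]|%:R
       + 4 * #|S :&: [set i | ~~ b i]|%:R) / d%:R.
Proof.
move=> hd.
have hr : Num.sqrt d%:R ^+ 2 = d%:R :> R by rewrite sqr_sqrtr.
have hr0 : Num.sqrt d%:R != 0 :> R by rewrite sqrtr_eq0 -ltNge ltr0n.
have hd0 : d%:R != 0 :> R by rewrite pnatr_eq0 -lt0n.
rewrite /dotp.
have -> : \sum_(i < d) Defs.coord (phi S) i * Defs.coord b i =
   \sum_(i < d) (1 - 2 * (i \in S)%:R - 2 * (i \in [set i | ~~ b i])%:R
       + 4 * (i \in S :&: [set i | ~~ b i])%:R) / d%:R :> R.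
  apply: eq_bigr => i _; rewrite /Defs.coord /phi ffunE !inE.
  set r := Num.sqrt d%:R in hr hr0 *.
  case: (i \in S); case: (b i) => /=; rewrite ?mulr1n ?mulr0n -hr; field; exact: hr0.
rewrite -big_distrl /= !big_split /= !sumrN -!big_distrr /= !sum_ind sumr_const card_ord.
by [].
Qed.

Local Open Scope ring_scope.

Lemma ln2_ge (R : realType) : 3/5 <= ln (2 : R).
Proof.
have hx0 : 0 < expR (3/20) :> R by exact: expR_gt0.
have e1 : expR (3/20) * (17/20) <= 1 :> R.
  have h := expR_ge1Dx (- (3/20) : R).
  have := ler_wpM2l (ltW hx0) h; rewrite expRxMexpNx_1; lra.
have e2 : expR (3/5) <= 2 :> R.
  have -> : (3/5 : R) = 4%:R * (3/20) by rewrite -[4%:R]/(4 : R); field.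
  rewrite expRM_natl.
  set x := expR (3/20) in hx0 e1 *.
  have hx : x <= 20/17 by lra.
  have hx2 : x ^+ 2 <= 400/289 by rewrite expr2; nra.
  have -> : x ^+ 4 = x ^+ 2 * x ^+ 2 by rewrite -exprD.
  have : 0 <= x ^+ 2 by exact: sqr_ge0.
  nra.
have := e2; rewrite -ler_ln ?posrE ?expR_gt0 // expRK //.
Qed.

Lemma lnn_case (R : realType) n : (0 < n)%N -> ln (n%:R : R) = 0 \/ 3/5 <= ln (n%:R : R).
Proof.
case: n => // -[|n] _; first by left; rewrite ln1.
right; apply: (le_trans (ln2_ge R)).
rewrite ler_ln ?posrE ?ltr0n // -[2]/(2%:R : R) ler_nat. done.
Qed.

Local Open Scope ring_scope.

Unset Implicit Arguments.
Theorem mainTheorem20 (R : realType) (n d : nat) (b : {ffun 'I_d -> bool}) :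
  (0 < n)%N -> (0 < d)%N ->
  (exists k : nat, k%:R = 3 * d%:R / 4 :> R) ->
  (exists m : int, m%:~R = 12 * d%:R * @calD R n d :> R) ->
  @special R n d b ->
  8 * ln (n%:R : R) ^+ 2 <= d%:R ->
  @prob_regular R d (fun a => @dotp R d a b > 1 / 4 - 6 * @calD R n d) <= 1 / (n%:R ^+ 3) /\
  @prob_regular R d (fun a => @dotp R d a b < 1 / 4 - 18 * @calD R n d) <= 1 / (n%:R ^+ 3).
Proof.
move=> hn hd [k3 hk3] [m hm] hsp _.
have hd0 : 0 < d%:R :> R by rewrite ltr0n.
set L := ln (n%:R : R).
set u := @calD R n d.
have hr0 : 0 < Num.sqrt d%:R :> R by rewrite sqrtr_gt0.
have hr2 : Num.sqrt d%:R ^+ 2 = d%:R :> R by rewrite sqr_sqrtr // ltW.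
have hu2 : d%:R * u ^+ 2 = L ^+ 2.
  rewrite /u /calD -/L -{1}hr2; field; exact: lt0r_neq0.
have hL0 : 0 <= L by apply: ln_ge0; rewrite ler1n.
have hu0 : 0 <= u by rewrite /u /calD divr_ge0 // ltW.
move: hsp; rewrite /special => /andP [_ /eqP hneg].
rewrite -hm in hneg.
set t := m%:~R : R in hneg hm.
set Bn := [set i : 'I_d | ~~ b i].
have hBn : #|Bn|%:R = d%:R / 4 + 12 * d%:R * u :> R by rewrite hneg hm.
have hBnd : (#|Bn| <= d)%N by rewrite -[X in (_ <= X)%N](card_ord d) max_card.
have hu16 : u <= 1/16.
  have : #|Bn|%:R <= d%:R :> R by rewrite ler_nat.
  rewrite hBn => h; nra.
have hk3d : (k3 <= d)%N by rewrite -(ler_nat R) hk3; lra.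
set k := (d - k3)%N.
have hk : k%:R = d%:R / 4 :> R by rewrite /k natrB // hk3; field.
have hCpos : 0 < 'C(d, k)%:R :> R by rewrite ltr0n bin_gt0 leq_subr.
have hden : #|[set a | @regular R d a]| = 'C(d, k).
  transitivity #|[set a | @regular R d a && true]|.
    by apply: eq_card => a; rewrite !inE andbT.
  rewrite (card_regular _ hk3) -/k.
  have := card_draws ('I_d) k; rewrite card_ord => <-.
  by apply: eq_card => S; rewrite !inE andbT.
have hnE : 1 / (n%:R ^+ 3) = expR (- (3 * L)) :> R.
  rewrite expRN -[3 : R]/(3%:R) expRM_natl /L lnK ?posrE ?ltr0n //; lra.
have hfin : - (9 * (1 - 43/100)) * L ^+ 2 <= - (3 * L).
  by case: (lnn_case R hn) => h; rewrite -/L in h; [rewrite h; lra | nra].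
have hl : 0 <= 6 * u <= 3/8 by apply/andP; split; lra.
have hdk : forall S : {set 'I_d}, #|S| == k -> #|S|%:R = d%:R / 4 :> R.
  by move=> S /eqP ->.
have hdot : forall S : {set 'I_d}, #|S| == k ->
    @dotp R d (phi S) b = (4 * #|S :&: Bn|%:R - 24 * d%:R * u) / d%:R.
  move=> S hS; rewrite dot_phi // -/Bn (hdk _ hS) hBn; congr (_ / _); lra.
have hT : (0 < #|'I_d|)%N by rewrite card_ord.
split.
- rewrite /prob_regular hden (card_regular _ hk3) -/k hnE.
  pose P := fun S : {set 'I_d} => 1 / 4 - 6 * u < @dotp R d (phi S) b.
  have hP : forall S : {set 'I_d}, #|S| == k -> P S ->
      d%:R / 16 + 9/2 * d%:R * u <= #|S :&: Bn|%:R.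
    move=> S hS; rewrite /P hdot // ltr_pdivlMr // => h; lra.
  have := tail_bound hl hT hP; rewrite card_ord hk hBn => h.
  rewrite ler_pdivrMr // [X in _ <= X]mulrC; apply: (le_trans h); apply: ler_wpM2l; first exact: ltW.
  rewrite ler_expR.
  have -> : d%:R / 4 * ((d%:R / 4 + 12 * d%:R * u) / d%:R * (6 * u) + 43 / 100 * (6 * u) ^+ 2) -
     6 * u * (d%:R / 16 + 9 / 2 * d%:R * u) = - (9 * (1 - 43/100)) * (d%:R * u ^+ 2).
    field; exact: lt0r_neq0.
  by rewrite hu2.
- rewrite /prob_regular hden (card_regular _ hk3) -/k hnE.
  pose P := fun S : {set 'I_d} => @dotp R d (phi S) b < 1 / 4 - 18 * u.
  have hBp : #|~: Bn|%:R = 3 * d%:R / 4 - 12 * d%:R * u :> R.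
    have := cardsC Bn; rewrite card_ord => h.
    have : (#|Bn| + #|~: Bn|)%:R = d%:R :> R by rewrite h.
    rewrite natrD hBn => h'; lra.
  have hP : forall S : {set 'I_d}, #|S| == k -> P S ->
      3 * d%:R / 16 - 3/2 * d%:R * u <= #|S :&: ~: Bn|%:R.
    move=> S hS; rewrite /P hdot // ltr_pdivrMr // => h.
    have hc := cardsID Bn S; rewrite setDE in hc.
    have : (#|S :&: Bn| + #|S :&: ~: Bn|)%:R = #|S|%:R :> R by rewrite hc.
    rewrite natrD (hdk _ hS) => h'; lra.
  have := tail_bound hl hT hP; rewrite card_ord hk hBp => h.
  rewrite ler_pdivrMr // [X in _ <= X]mulrC; apply: (le_trans h); apply: ler_wpM2l; first exact: ltW.
  rewrite ler_expR.
  have -> : d%:R / 4 * ((3 * d%:R / 4 - 12 * d%:R * u) / d%:R * (6 * u) + 43 / 100 * (6 * u) ^+ 2) -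
     6 * u * (3 * d%:R / 16 - 3/2 * d%:R * u) = - (9 * (1 - 43/100)) * (d%:R * u ^+ 2).
    field; exact: lt0r_neq0.
  by rewrite hu2.
Qed.
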